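(* Let $(W_n)$ be a standard numbering of the c.e. subsets of $\omega$, $V_n=\{(i,j)\mid\langle i,j\rangle\in W_n\}$ for a computable pairing bijection $\langle\cdot,\cdot\rangle$, and let $t$ be a computable function such that $V_{t(n)}$ is the transitive closure of $V_n$ for every $n$. Then the set $\{n\in\omega\mid V_{t(n)}\text{ is interpolable}\}$ is $\Pi^0_2$-complete; that is, deciding whether a given c.e. transitive relation on $\omega$ is interpolable is $\Pi^0_2$-complete.
   Context: A transitive relation $\prec$ on $\omega$ is interpolable if for every $y$ the initial segment $\{x\mid x\prec y\}$ is directed, i.e. non-empty and such that any two of its elements have a $\prec$-upper bound in it. *)

(* Defs.v *)
From Stdlib Require Import List Arith Relations.
Import ListNotations.

(* ---------- mu-recursive programs (arguments are lists of naturals;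
   missing arguments default to 0) ---------- *)
Inductive prog : Type :=
| Zero : prog
| Succ : prog
| Proj : nat -> prog
| Comp : prog -> list prog -> prog
| Prim : prog -> prog -> prog
| Mu   : prog -> prog.

Fixpoint eval (k : nat) (p : prog) (args : list nat) {struct k} : option nat :=
  match k with
  | 0 => None
  | S k' =>
    match p with
    | Zero => Some 0
    | Succ => Some (S (hd 0 args))
    | Proj i => Some (nth i args 0)
    | Comp f gs =>
        let fix evl (l : list prog) : option (list nat) :=
          match l with
          | nil => Some nil
          | g :: l' =>
              match eval k' g args, evl l' with
              | Some v, Some vs => Some (v :: vs)
              | _, _ => None
              end
          end in
        match evl gs with
        | Some vs => eval k' f vs
        | None => None
        end
    | Prim f g =>
        let xs := tl args in
        match hd 0 args with
        | 0 => eval k' f xs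
        | S m =>
            match eval k' (Prim f g) (m :: xs) with
            | Some r => eval k' g (m :: r :: xs)
            | None => None
            end
        end
    | Mu f =>
        let fix search (c y : nat) : option nat :=
          match c with
          | 0 => None
          | S c' =>
              match eval k' f (y :: args) with
              | Some 0 => Some y
              | Some _ => search c' (S y)
              | None => None
              end
          end in
        search k' 0
    end
  end.

Definition converges (p : prog) (args : list nat) (v : nat) : Prop :=
  exists k, eval k p args = Some v.

Definition pair (i j : nat) : nat := (i + j) * (i + j + 1) / 2 + j.

Fixpoint unpair (z : nat) : nat * nat :=
  match z with
  | 0 => (0, 0)
  | S z' => let (i, j) := unpair z' in
            match i with
            | 0 => (S j, 0)
            | S i' => (i', S j)
            end
  end.

(* ---------- Goedel numbering of programs (surjective decoding) ---------- *)
Fixpoint dec (fuel n : nat) {struct fuel} : prog :=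
  match fuel with
  | 0 => Zero
  | S f =>
    let q := n / 6 in
    match n mod 6 with
    | 0 => Zero
    | 1 => Succ
    | 2 => Proj q
    | 3 => Comp (dec f (fst (unpair q))) (dec_list f (snd (unpair q)))
    | 4 => Prim (dec f (fst (unpair q))) (dec f (snd (unpair q)))
    | _ => Mu (dec f q)
    end
  end
with dec_list (fuel m : nat) {struct fuel} : list prog :=
  match fuel with
  | 0 => nil
  | S f =>
    match m with
    | 0 => nil
    | S m' => dec f (fst (unpair m')) :: dec_list f (snd (unpair m'))
    end
  end.

Definition decode (n : nat) : prog := dec (S n) n.

Definition W (n x : nat) : Prop := exists v, converges (decode n) [x] v.

Definition V (n i j : nat) : Prop := W n (pair i j).

Definition computable_fun (f : nat -> nat) : Prop :=
  exists p : prog, forall x, converges p [x] (f x).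

Definition computable_rel3 (R : nat -> nat -> nat -> Prop) : Prop :=
  exists p : prog, forall n x y,
    (R n x y -> converges p [n; x; y] 0) /\
    (~ R n x y -> converges p [n; x; y] 1).

Definition Pi02 (A : nat -> Prop) : Prop :=
  exists R, computable_rel3 R /\
    forall n, A n <-> (forall x, exists y, R n x y).

Definition many_one_reducible (B A : nat -> Prop) : Prop :=
  exists f, computable_fun f /\ forall n, B n <-> A (f n).

Definition Pi02_complete (A : nat -> Prop) : Prop :=
  Pi02 A /\ forall B, Pi02 B -> many_one_reducible B A.

Definition directed_below (R : nat -> nat -> Prop) (y : nat) : Prop :=
  (exists x, R x y) /\
  (forall a b, R a y -> R b y -> exists c, R c y /\ R a c /\ R b c).

Definition interpolable (R : nat -> nat -> Prop) : Prop :=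
  transitive nat R /\ forall y, directed_below R y.

(* Main.v *)
Require Import Defs.
From Stdlib Require Import List Arith Lia Relations.
From Stdlib Require Import ClassicalDescription.
Import ListNotations.

Fixpoint evalL (k : nat) (gs : list prog) (a : list nat) : option (list nat) :=
  match gs with
  | nil => Some nil
  | g :: l => match eval k g a, evalL k l a with
              | Some v, Some vs => Some (v :: vs)
              | _, _ => None end
  end.

Fixpoint srch (k : nat) (f : prog) (a : list nat) (c y : nat) : option nat :=
  match c with
  | 0 => None
  | S c' => match eval k f (y :: a) with
            | Some 0 => Some y
            | Some _ => srch k f a c' (S y)
            | None => None end
  end.

Lemma eval_Comp k f gs a : eval (S k) (Comp f gs) a =
  match evalL k gs a with Some vs => eval k f vs | None => None end.
Proof.
  simpl.
  match goal with |- match ?F gs with _ => _ end = _ =>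
    assert (E: forall l, F l = evalL k l a) end.
  { induction l; simpl; [reflexivity| rewrite IHl; reflexivity]. }
  rewrite E; reflexivity.
Qed.

Lemma eval_Mu k f a : eval (S k) (Mu f) a = srch k f a k 0.
Proof.
  simpl.
  match goal with |- ?F k 0 = _ =>
    assert (E: forall c y, F c y = srch k f a c y) end.
  { induction c; intros y; simpl; [reflexivity|].
    destruct (eval k f (y :: a)) as [[|n]|]; try reflexivity. apply IHc. }
  apply E.
Qed.

Lemma eval_Prim k f g a : eval (S k) (Prim f g) a =
  match hd 0 a with
  | 0 => eval k f (tl a)
  | S m => match eval k (Prim f g) (m :: tl a) with
           | Some r => eval k g (m :: r :: tl a)
           | None => None end
  end.
Proof. reflexivity. Qed.

Lemma srch_S k f a c y : srch k f a (S c) y =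
  match eval k f (y :: a) with Some 0 => Some y | Some _ => srch k f a c (S y) | None => None end.
Proof. reflexivity. Qed.

Lemma eval_mono1 : forall k p a v, eval k p a = Some v -> eval (S k) p a = Some v.
Proof.
  induction k; intros p a v H; [discriminate|].
  destruct p.
  - exact H.
  - exact H.
  - exact H.
  - rewrite eval_Comp in *.
    assert (HL: forall gs vs, evalL k gs a = Some vs -> evalL (S k) gs a = Some vs).
    { induction gs as [|g gs IH]; intros vs E; simpl in *; [exact E|].
      destruct (eval k g a) eqn:E1; [|discriminate].
      destruct (evalL k gs a) eqn:E2; [|discriminate].
      rewrite (IHk _ _ _ E1). rewrite (IH _ eq_refl). exact E. }
    destruct (evalL k l a) eqn:E; [|discriminate].
    rewrite (HL _ _ E). apply IHk; exact H.
  - rewrite eval_Prim in *. destruct (hd 0 a).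
    + apply IHk; exact H.
    + destruct (eval k (Prim p1 p2) (n :: tl a)) eqn:E; [|discriminate].
      rewrite (IHk _ _ _ E). apply IHk; exact H.
  - rewrite eval_Mu in *.
    assert (HS: forall c y, srch k p a c y = Some v -> srch (S k) p a (S c) y = Some v).
    { induction c; intros y E; simpl in E; [discriminate|].
      rewrite srch_S. destruct (eval k p (y :: a)) eqn:E1; [|discriminate].
      rewrite (IHk _ _ _ E1). destruct n; [exact E|]. apply IHc; exact E. }
    apply HS; exact H.
Qed.

Lemma eval_mono : forall k k' p a v, k <= k' -> eval k p a = Some v -> eval k' p a = Some v.
Proof. intros k k' p a v Hle; induction Hle; auto using eval_mono1. Qed.

Inductive BS : prog -> list nat -> nat -> Prop :=
| BZero a : BS Zero a 0
| BSucc a : BS Succ a (S (hd 0 a))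
| BProj i a : BS (Proj i) a (nth i a 0)
| BComp f gs a vs v : BSL gs a vs -> BS f vs v -> BS (Comp f gs) a v
| BPrim0 f g a v : hd 0 a = 0 -> BS f (tl a) v -> BS (Prim f g) a v
| BPrimS f g a m r v : hd 0 a = S m -> BS (Prim f g) (m :: tl a) r ->
    BS g (m :: r :: tl a) v -> BS (Prim f g) a v
| BMu f a v : BSM f a 0 v -> BS (Mu f) a v
with BSL : list prog -> list nat -> list nat -> Prop :=
| BLnil a : BSL nil a nil
| BLcons g gs a v vs : BS g a v -> BSL gs a vs -> BSL (g :: gs) a (v :: vs)
with BSM : prog -> list nat -> nat -> nat -> Prop :=
| BMfound f a y : BS f (y :: a) 0 -> BSM f a y y
| BMnext f a y w v : BS f (y :: a) (S w) -> BSM f a (S y) v -> BSM f a y v.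

Scheme BS_ind' := Induction for BS Sort Prop
with BSL_ind' := Induction for BSL Sort Prop
with BSM_ind' := Induction for BSM Sort Prop.

Lemma eval_BS : forall k p a v, eval k p a = Some v -> BS p a v.
Proof.
  induction k; intros p a v H; [discriminate|].
  destruct p.
  - injection H as <-. constructor.
  - injection H as <-. constructor.
  - injection H as <-. constructor.
  - rewrite eval_Comp in H.
    assert (HL: forall gs vs, evalL k gs a = Some vs -> BSL gs a vs).
    { induction gs as [|g gs IH]; intros vs E; simpl in *.
      - injection E as <-. constructor.
      - destruct (eval k g a) eqn:E1; [|discriminate].
        destruct (evalL k gs a) eqn:E2; [|discriminate].
        injection E as <-. constructor; auto. }
    destruct (evalL k l a) eqn:E; [|discriminate].
    econstructor; eauto.
  - rewrite eval_Prim in H. destruct (hd 0 a) eqn:Eh.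
    + apply BPrim0; auto.
    + destruct (eval k (Prim p1 p2) (n :: tl a)) eqn:E; [|discriminate].
      eapply BPrimS; eauto.
  - rewrite eval_Mu in H. constructor.
    assert (HS: forall c y, srch k p a c y = Some v -> BSM p a y v).
    { induction c; intros y E; simpl in E; [discriminate|].
      destruct (eval k p (y :: a)) eqn:E1; [|discriminate].
      destruct n.
      - injection E as <-. constructor; auto.
      - eapply BMnext; eauto. }
    eauto.
Qed.

Lemma evalL_mono a : forall gs vs k k', k <= k' -> evalL k gs a = Some vs -> evalL k' gs a = Some vs.
Proof.
  induction gs as [|g gs IH]; intros vs k k' Hk E; simpl in *; [exact E|].
  destruct (eval k g a) eqn:E1; [|discriminate].
  destruct (evalL k gs a) eqn:E2; [|discriminate].
  rewrite (eval_mono _ _ _ _ _ Hk E1). rewrite (IH _ _ _ Hk E2). exact E.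
Qed.

Combined Scheme BS_mut from BS_ind', BSL_ind', BSM_ind'.

Lemma BS_eval_all :
  (forall p a v, BS p a v -> exists k, eval k p a = Some v) /\
  (forall gs a vs, BSL gs a vs -> exists k, evalL k gs a = Some vs) /\
  (forall f a y v, BSM f a y v -> y <= v /\ exists k, forall k' c, k <= k' -> v - y < c ->
       srch k' f a c y = Some v).
Proof.
  apply BS_mut.
  - intros a. exists 1. reflexivity.
  - intros a. exists 1. reflexivity.
  - intros i a. exists 1. reflexivity.
  - intros f gs a vs v _ [k1 H1] _ [k2 H2].
    exists (S (max k1 k2)). rewrite eval_Comp.
    rewrite (evalL_mono a gs vs k1); [|lia|exact H1]. eapply eval_mono; [|exact H2]. lia.
  - intros f g a v Eh _ [k H]. exists (S k). rewrite eval_Prim, Eh. exact H.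
  - intros f g a m r v Eh _ [k1 H1] _ [k2 H2]. exists (S (max k1 k2)).
    rewrite eval_Prim, Eh. rewrite (eval_mono k1 (max k1 k2) _ _ _ ltac:(lia) H1).
    eapply eval_mono; [|exact H2]. lia.
  - intros f a v _ [_ [k H]]. exists (S (max k (S v))). rewrite eval_Mu.
    apply H; lia.
  - intros a. exists 1. reflexivity.
  - intros g gs a v vs _ [k1 H1] _ [k2 H2]. exists (max k1 k2). simpl.
    rewrite (eval_mono k1 (max k1 k2) _ _ _ ltac:(lia) H1).
    rewrite (evalL_mono a gs vs k2); [reflexivity|lia|exact H2].
  - intros f a y _ [k H]. split; [lia|]. exists k. intros k' c Hk Hc.
    destruct c; [lia|]. rewrite srch_S. rewrite (eval_mono k k' _ _ _ ltac:(lia) H). reflexivity.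
  - intros f a y w v _ [k1 H1] _ [Hle [k2 H2]]. split; [lia|].
    exists (max k1 k2). intros k' c Hk Hc. destruct c; [lia|]. rewrite srch_S.
    rewrite (eval_mono k1 k' _ _ _ ltac:(lia) H1). apply H2; lia.
Qed.

Lemma BS_conv p a v : BS p a v <-> converges p a v.
Proof.
  split.
  - intros H. apply (proj1 BS_eval_all) in H. exact H.
  - intros [k H]. eapply eval_BS; eauto.
Qed.

Lemma BS_det p a v w : BS p a v -> BS p a w -> v = w.
Proof.
  intros H1 H2. apply BS_conv in H1, H2. destruct H1 as [k1 H1], H2 as [k2 H2].
  apply (eval_mono k1 (max k1 k2)) in H1; [|lia].
  apply (eval_mono k2 (max k1 k2)) in H2; [|lia].
  congruence.
Qed.

Definition rep (f : list nat -> nat) := exists p, forall a, BS p a (f a).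

Lemma rep_ext f g : (forall a, f a = g a) -> rep f -> rep g.
Proof. intros E [p H]. exists p. intros a. rewrite <- E. apply H. Qed.

Lemma rep_zero : rep (fun _ => 0).
Proof. exists Zero. intros; constructor. Qed.

Lemma rep_proj i : rep (fun a => nth i a 0).
Proof. exists (Proj i). intros; constructor. Qed.

Lemma rep_comp f gs : rep f -> Forall rep gs -> rep (fun a => f (map (fun g => g a) gs)).
Proof.
  intros [pf Hf] HF.
  assert (HL: exists ps, forall a, BSL ps a (map (fun g => g a) gs)).
  { induction HF as [|g gs [pg Hg] _ [ps Hps]].
    - exists nil. intros; constructor.
    - exists (pg :: ps). intros a; simpl; constructor; auto. }
  destruct HL as [ps Hps]. exists (Comp pf ps). intros a. econstructor; eauto.
Qed.

Fixpoint prf (f g : list nat -> nat) (m : nat) (xs : list nat) : nat :=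
  match m with 0 => f xs | S m' => g (m' :: prf f g m' xs :: xs) end.

Lemma rep_prim f g : rep f -> rep g -> rep (fun a => prf f g (hd 0 a) (tl a)).
Proof.
  intros [pf Hf] [pg Hg]. exists (Prim pf pg).
  assert (H: forall m a, hd 0 a = m -> BS (Prim pf pg) a (prf f g m (tl a))).
  { induction m; intros a E; simpl.
    - apply BPrim0; auto.
    - eapply BPrimS; [exact E| |].
      + apply (IHm (m :: tl a)); reflexivity.
      + apply Hg. }
  intros a; apply H; reflexivity.
Qed.

Lemma rep_mu f F : rep f ->
  (forall a, f (F a :: a) = 0 /\ forall y, y < F a -> f (y :: a) <> 0) -> rep F.
Proof.
  intros [pf Hf] HF. exists (Mu pf). intros a. constructor.
  destruct (HF a) as [H0 H1].
  assert (forall d y, y + d = F a -> BSM pf a y (F a)).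
  { induction d; intros y E.
    - replace y with (F a) by lia. constructor. pose proof (Hf (F a :: a)) as X; rewrite H0 in X; exact X.
    - assert (Hy: y < F a) by lia. specialize (H1 y Hy).
      destruct (f (y :: a)) eqn:E1; [congruence|].
      eapply BMnext; [pose proof (Hf (y :: a)) as X; rewrite E1 in X; exact X|]. apply IHd; lia. }
  apply (H (F a) 0); lia.
Qed.

Definition rep1 (f : nat -> nat) := rep (fun a => f (nth 0 a 0)).
Definition rep2 (f : nat -> nat -> nat) := rep (fun a => f (nth 0 a 0) (nth 1 a 0)).
Definition rep3 (f : nat -> nat -> nat -> nat) :=
  rep (fun a => f (nth 0 a 0) (nth 1 a 0) (nth 2 a 0)).

Lemma rep_comp1 f g : rep1 f -> rep g -> rep (fun a => f (g a)).
Proof.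
  intros Hf Hg. apply (rep_comp _ [g]) in Hf; [|repeat constructor; auto].
  eapply rep_ext; [|exact Hf]. reflexivity.
Qed.
Lemma rep_comp2 f g h : rep2 f -> rep g -> rep h -> rep (fun a => f (g a) (h a)).
Proof.
  intros Hf Hg Hh. apply (rep_comp _ [g; h]) in Hf; [|repeat constructor; auto].
  eapply rep_ext; [|exact Hf]. reflexivity.
Qed.
Lemma rep_comp3 f g h k : rep3 f -> rep g -> rep h -> rep k -> rep (fun a => f (g a) (h a) (k a)).
Proof.
  intros Hf Hg Hh Hk. apply (rep_comp _ [g; h; k]) in Hf; [|repeat constructor; auto].
  eapply rep_ext; [|exact Hf]. reflexivity.
Qed.

Lemma rep_succ : rep1 S.
Proof.
  exists Succ. intros a. replace (S (nth 0 a 0)) with (S (hd 0 a)) by (destruct a; reflexivity).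
  constructor.
Qed.

Lemma rep_const c : rep (fun _ => c).
Proof.
  induction c; [apply rep_zero|]. apply (rep_comp1 S (fun _ => c)); auto using rep_succ.
Qed.

Create HintDb rep.
#[export] Hint Resolve rep_succ : rep.

Ltac rp := first
  [ apply rep_const
  | apply rep_proj
  | eapply rep_comp3; [solve [eauto with rep] | rp | rp | rp]
  | eapply rep_comp2; [solve [eauto with rep] | rp | rp]
  | eapply rep_comp1; [solve [eauto with rep] | rp] ].

Lemma rep_add : rep2 Nat.add.
Proof.
  pose proof (rep_prim (fun xs => nth 0 xs 0) (fun a => S (nth 1 a 0))) as H.
  eapply rep_ext; [|apply H; rp].
  assert (E: forall m xs, prf (fun xs => nth 0 xs 0) (fun a => S (nth 1 a 0)) m xs = m + nth 0 xs 0)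
    by (induction m; simpl; auto).
  intros a. destruct a as [|m xs]; simpl; try rewrite E; auto.
Qed.
#[export] Hint Resolve rep_add : rep.

Lemma rep_mul : rep2 Nat.mul.
Proof.
  pose proof (rep_prim (fun xs => 0) (fun a => nth 1 a 0 + nth 2 a 0)) as H.
  eapply rep_ext; [|apply H; rp].
  assert (E: forall m xs, prf (fun xs => 0) (fun a => nth 1 a 0 + nth 2 a 0) m xs = m * nth 0 xs 0)
    by (induction m; simpl; intros; auto; rewrite IHm; lia).
  intros a. destruct a as [|m xs]; simpl; try rewrite E; auto.
Qed.
#[export] Hint Resolve rep_mul : rep.

Lemma rep_pred : rep1 Nat.pred.
Proof.
  pose proof (rep_prim (fun xs => 0) (fun a => nth 0 a 0)) as H.
  eapply rep_ext; [|apply H; rp].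
  intros a. destruct a as [|m a]; simpl; auto. destruct m; reflexivity.
Qed.
#[export] Hint Resolve rep_pred : rep.

Lemma rep_sub : rep2 Nat.sub.
Proof.
  pose proof (rep_prim (fun xs => nth 0 xs 0) (fun a => Nat.pred (nth 1 a 0))) as H.
  assert (H2: rep (fun a => prf (fun xs => nth 0 xs 0) (fun a => Nat.pred (nth 1 a 0))
       (hd 0 a) (tl a))) by (apply H; rp).
  apply (rep_comp _ [fun a => nth 1 a 0; fun a => nth 0 a 0]) in H2; [|repeat constructor; apply rep_proj].
  eapply rep_ext; [|exact H2].
  intros a. simpl. generalize (nth 0 a 0) (nth 1 a 0). intros x y.
  induction y; simpl; [lia|]. rewrite IHy. lia.
Qed.
#[export] Hint Resolve rep_sub : rep.

Definition cond (c x y : nat) := match c with 0 => x | S _ => y end.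

Lemma rep_cond : rep3 cond.
Proof.
  pose proof (rep_prim (fun xs => nth 0 xs 0) (fun a => nth 3 a 0)) as H.
  eapply rep_ext; [|apply H; rp].
  intros a. destruct a as [|m a]; simpl; [reflexivity|].
  destruct m; simpl; auto.
Qed.
#[export] Hint Resolve rep_cond : rep.

Lemma rep_div d : d <> 0 -> rep1 (fun n => n / d).
Proof.
  intros Hd. apply (rep_mu (fun a => S (nth 1 a 0) - d * S (nth 0 a 0))); [rp|].
  intros a. cbn [nth]. split.
  - pose proof (Nat.mul_succ_div_gt (nth 0 a 0) d Hd). lia.
  - intros y Hy. pose proof (Nat.Div0.mul_div_le (nth 0 a 0) d).
    assert (d * S y <= d * (nth 0 a 0 / d)) by (apply Nat.mul_le_mono_l; lia). lia.
Qed.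

Definition tri s := s * (s + 1) / 2.

Lemma pair_tri i j : pair i j = tri (i + j) + j.
Proof. reflexivity. Qed.

Lemma tri_S s : tri (S s) = tri s + S s.
Proof.
  unfold tri. replace (S s * (S s + 1)) with (s * (s + 1) + S s * 2) by lia.
  rewrite Nat.div_add; lia.
Qed.

Lemma tri_mono s s' : s <= s' -> tri s <= tri s'.
Proof. induction 1; [lia|]. rewrite tri_S. lia. Qed.

Lemma tri_ge s : s <= tri s.
Proof. induction s; [unfold tri; simpl; lia|]. rewrite tri_S. lia. Qed.

Lemma pair_unpair z : pair (fst (unpair z)) (snd (unpair z)) = z.
Proof.
  induction z; [reflexivity|]. simpl. destruct (unpair z) as [i j]. simpl in *.
  destruct i as [|i'].
  - simpl. rewrite pair_tri in *. simpl in IHz. replace (S j + 0) with (S j) by lia. rewrite tri_S. lia.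
  - simpl. rewrite pair_tri in *. replace (i' + S j) with (S i' + j) by lia. lia.
Qed.

Lemma pair_bounds i j : tri (i + j) <= pair i j < tri (S (i + j)).
Proof. rewrite pair_tri, tri_S. lia. Qed.

Lemma pair_inj i j i' j' : pair i j = pair i' j' -> i = i' /\ j = j'.
Proof.
  intros E.
  assert (i + j = i' + j').
  { pose proof (pair_bounds i j). pose proof (pair_bounds i' j').
    destruct (Nat.lt_trichotomy (i + j) (i' + j')) as [L|[L|L]]; auto.
    - pose proof (tri_mono (S (i + j)) (i' + j') L). lia.
    - pose proof (tri_mono (S (i' + j')) (i + j) L). lia. }
  rewrite !pair_tri in E. rewrite H in E. lia.
Qed.

Lemma unpair_pair i j : unpair (pair i j) = (i, j).
Proof.
  pose proof (pair_unpair (pair i j)) as E.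
  destruct (unpair (pair i j)) as [a b]. simpl in E.
  apply pair_inj in E. destruct E; subst; reflexivity.
Qed.

Definition p1 z := fst (unpair z).
Definition p2 z := snd (unpair z).

Lemma p1_pair i j : p1 (pair i j) = i.
Proof. unfold p1; rewrite unpair_pair; reflexivity. Qed.
Lemma p2_pair i j : p2 (pair i j) = j.
Proof. unfold p2; rewrite unpair_pair; reflexivity. Qed.
Lemma pair_p z : pair (p1 z) (p2 z) = z.
Proof. apply pair_unpair. Qed.

Lemma p1_le z : p1 z <= z.
Proof.
  rewrite <- (pair_p z) at 2. rewrite pair_tri. pose proof (tri_ge (p1 z + p2 z)). lia.
Qed.
Lemma p2_le z : p2 z <= z.
Proof. rewrite <- (pair_p z) at 2. rewrite pair_tri. lia. Qed.

Lemma rep_div2 : rep1 (fun n => n / 2).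
Proof. apply rep_div; lia. Qed.

Lemma rep_tri : rep1 tri.
Proof.
  unfold tri. apply (rep_comp1 (fun n => n / 2)); [apply rep_div2|].
  apply (rep_comp2 Nat.mul); [apply rep_mul|apply rep_proj|].
  apply (rep_comp2 Nat.add); [apply rep_add|apply rep_proj|apply rep_const].
Qed.
#[export] Hint Resolve rep_tri : rep.

Lemma rep_pair : rep2 pair.
Proof. unfold rep2. eapply rep_ext; [intros; symmetry; apply pair_tri|]. rp. Qed.
#[export] Hint Resolve rep_pair : rep.

Definition psum z := p1 z + p2 z.

Lemma rep_psum : rep1 psum.
Proof.
  apply (rep_mu (fun a => S (nth 1 a 0) - tri (S (nth 0 a 0)))); [rp|].
  intros a. cbn [nth]. set (z := nth 0 a 0). split.
  - pose proof (pair_bounds (p1 z) (p2 z)). rewrite pair_p in H. unfold psum. lia.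
  - intros y Hy. pose proof (pair_bounds (p1 z) (p2 z)). rewrite pair_p in H.
    pose proof (tri_mono (S y) (psum z) Hy). unfold psum in *. lia.
Qed.
#[export] Hint Resolve rep_psum : rep.

Lemma rep_p2 : rep1 p2.
Proof.
  eapply rep_ext; [|apply (rep_comp2 Nat.sub (fun a => nth 0 a 0) (fun a => tri (psum (nth 0 a 0)))); [apply rep_sub|rp|rp]].
  intros a. cbv beta. set (z := nth 0 a 0). rewrite <- (pair_p z) at 1. rewrite pair_tri.
  unfold psum. lia.
Qed.
#[export] Hint Resolve rep_p2 : rep.

Lemma rep_p1 : rep1 p1.
Proof.
  eapply rep_ext; [|apply (rep_comp2 Nat.sub (fun a => psum (nth 0 a 0)) (fun a => p2 (nth 0 a 0))); [apply rep_sub|rp|rp]].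
  intros a. cbv beta. unfold psum. lia.
Qed.
#[export] Hint Resolve rep_p1 : rep.

Fixpoint lcode (l : list nat) : nat :=
  match l with nil => 0 | x :: l => S (pair x (lcode l)) end.

Definition lcons x z := S (pair x z).
Definition lhd z := p1 (pred z).
Definition ltl z := p2 (pred z).

Lemma rep_lcons : rep2 lcons.
Proof. unfold rep2, lcons. rp. Qed.
Lemma rep_lhd : rep1 lhd.
Proof. unfold rep1, lhd. rp. Qed.
Lemma rep_ltl : rep1 ltl.
Proof. unfold rep1, ltl. rp. Qed.
#[export] Hint Resolve rep_lcons rep_lhd rep_ltl : rep.

Fixpoint ldecf (f z : nat) : list nat :=
  match f with 0 => nil | S f' =>
    match z with 0 => nil | S w => p1 w :: ldecf f' (p2 w) end end.
Definition ldec z := ldecf z z.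

Lemma lcode_ldecf f z : z <= f -> lcode (ldecf f z) = z.
Proof.
  revert z; induction f; intros z Hz; simpl.
  - destruct z; [reflexivity|lia].
  - destruct z; [reflexivity|]. simpl. rewrite IHf; [rewrite pair_p; reflexivity|].
    pose proof (p2_le z). lia.
Qed.

Lemma lcode_ldec z : lcode (ldec z) = z.
Proof. apply lcode_ldecf; lia. Qed.

Lemma lcode_inj l l' : lcode l = lcode l' -> l = l'.
Proof.
  revert l'; induction l as [|x l IH]; intros [|x' l'] E; simpl in E; try discriminate; auto.
  injection E as E. apply pair_inj in E as [-> E]. f_equal; auto.
Qed.

Lemma ldec_lcode l : ldec (lcode l) = l.
Proof. apply lcode_inj. apply lcode_ldec. Qed.

Lemma lcons_code x l : lcons x (lcode l) = lcode (x :: l).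
Proof. reflexivity. Qed.
Lemma lhd_code l : lhd (lcode l) = hd 0 l.
Proof. destruct l; simpl; [reflexivity|]. unfold lhd; simpl. apply p1_pair. Qed.
Lemma ltl_code l : ltl (lcode l) = lcode (tl l).
Proof. destruct l; simpl; [reflexivity|]. unfold ltl; simpl. apply p2_pair. Qed.

Definition itl n z := Nat.iter n ltl z.

Lemma rep_itl : rep2 itl.
Proof.
  pose proof (rep_prim (fun xs => nth 0 xs 0) (fun a => ltl (nth 1 a 0))) as H.
  eapply rep_ext; [|apply H; rp].
  assert (E: forall m xs, prf (fun xs => nth 0 xs 0) (fun a => ltl (nth 1 a 0)) m xs = itl m (nth 0 xs 0))
    by (induction m; simpl; intros; auto; rewrite IHm; reflexivity).
  intros a. destruct a as [|m xs]; simpl; try rewrite E; auto.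
Qed.
#[export] Hint Resolve rep_itl : rep.


Lemma itl_code n l : itl n (lcode l) = lcode (skipn n l).
Proof.
  revert l; induction n; intros l; [reflexivity|].
  change (itl (S n) (lcode l)) with (ltl (itl n (lcode l))). rewrite IHn.
  rewrite ltl_code. f_equal. clear IHn. revert l; induction n; intros l; destruct l; simpl; auto.
Qed.

Definition lnth i z := lhd (itl i z).
Lemma rep_lnth : rep2 lnth.
Proof. unfold rep2, lnth. rp. Qed.
#[export] Hint Resolve rep_lnth : rep.

Lemma lnth_code i l : lnth i (lcode l) = nth i l 0.
Proof.
  unfold lnth. rewrite itl_code, lhd_code. revert l; induction i; intros [|x l]; simpl; auto.
Qed.

Definition len z := length (ldec z).

Lemma rep_len : rep1 len.
Proof.
  apply (rep_mu (fun a => itl (nth 0 a 0) (nth 1 a 0))); [rp|].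
  intros a. cbn [nth]. set (z := nth 0 a 0). unfold len.
  clearbody z. rewrite <- (lcode_ldec z). generalize (ldec z); intros l. rewrite ldec_lcode. split.
  - rewrite itl_code, skipn_all. reflexivity.
  - intros y Hy. rewrite itl_code. destruct (skipn y l) eqn:E; [|simpl; lia].
    apply (f_equal (@length nat)) in E. rewrite length_skipn in E. simpl in E. lia.
Qed.
#[export] Hint Resolve rep_len : rep.

Lemma len_code l : len (lcode l) = length l.
Proof. unfold len. rewrite ldec_lcode. reflexivity. Qed.

Definition eqz x y := (x - y) + (y - x).
Definition ltz x y := S x - y.
Definition andz x y := cond x (cond y 0 1) 1.
Definition orz x y := cond x 0 (cond y 0 1).
Definition notz x := cond x 1 0.

Lemma eqz_spec x y : eqz x y = 0 <-> x = y.
Proof. unfold eqz; lia. Qed.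
Lemma ltz_spec x y : ltz x y = 0 <-> x < y.
Proof. unfold ltz; lia. Qed.
Lemma andz_spec x y : andz x y = 0 <-> x = 0 /\ y = 0.
Proof. unfold andz, cond; destruct x, y; split; intuition congruence. Qed.
Lemma orz_spec x y : orz x y = 0 <-> x = 0 \/ y = 0.
Proof. unfold orz, cond; destruct x, y; split; intuition congruence. Qed.
Lemma notz_spec x : notz x = 0 <-> x <> 0.
Proof. unfold notz, cond; destruct x; split; intuition congruence. Qed.

Lemma rep_eqz : rep2 eqz. Proof. unfold rep2, eqz. rp. Qed.
Lemma rep_ltz : rep2 ltz. Proof. unfold rep2, ltz. rp. Qed.
Lemma rep_andz : rep2 andz. Proof. unfold rep2, andz. rp. Qed.
Lemma rep_orz : rep2 orz. Proof. unfold rep2, orz. rp. Qed.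
Lemma rep_notz : rep1 notz. Proof. unfold rep1, notz. rp. Qed.
#[export] Hint Resolve rep_eqz rep_ltz rep_andz rep_orz rep_notz : rep.

Fixpoint fs (P : nat -> nat) (n : nat) : nat :=
  match n with
  | 0 => 0
  | S n' => if fs P n' <? n' then fs P n' else if P n' =? 0 then n' else S n'
  end.

Lemma fs_spec P n : fs P n <= n /\ (fs P n < n -> P (fs P n) = 0) /\
  forall y, y < fs P n -> P y <> 0.
Proof.
  induction n; simpl; [split; [lia|split; [lia|intros; lia]]|].
  destruct IHn as [H1 [H2 H3]].
  destruct (fs P n <? n) eqn:E.
  - apply Nat.ltb_lt in E. split; [lia|split; auto].
  - apply Nat.ltb_ge in E. assert (fs P n = n) by lia.
    destruct (P n =? 0) eqn:E2.
    + apply Nat.eqb_eq in E2. split; [lia|split; auto]. intros y Hy. apply H3; lia.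
    + apply Nat.eqb_neq in E2. split; [lia|split; [lia|]].
      intros y Hy. destruct (Nat.eq_dec y n); [subst; auto|]. apply H3; lia.
Qed.

Definition bex (P : nat -> nat -> nat) (n x : nat) :=
  cond (ltz (fs (fun i => P i x) n) n) 0 1.

Lemma bex_spec P n x : bex P n x = 0 <-> exists i, i < n /\ P i x = 0.
Proof.
  unfold bex. destruct (fs_spec (fun i => P i x) n) as [H1 [H2 H3]].
  destruct (ltz (fs (fun i => P i x) n) n) eqn:E; simpl.
  - apply (proj1 (ltz_spec _ _)) in E. split; [intros _|auto]. exists (fs (fun i => P i x) n). auto.
  - split; [discriminate|]. intros [i [Hi HP]].
    assert (~ fs (fun i => P i x) n < n) by (intro L; apply (proj2 (ltz_spec _ _)) in L; congruence).
    exfalso; apply (H3 i); [lia|exact HP].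
Qed.

Lemma rep_bex P : rep2 P -> rep2 (bex P).
Proof.
  intros HP. unfold rep2, bex.
  assert (HF: rep (fun a => fs (fun i => P i (nth 1 a 0)) (nth 0 a 0))).
  { apply (rep_mu (fun b => orz (eqz (nth 0 b 0) (nth 1 b 0)) (P (nth 0 b 0) (nth 2 b 0)))).
    - apply (rep_comp2 orz); [apply rep_orz|rp|]. 
      apply (rep_comp2 P); [exact HP|rp|rp].
    - intros a. cbn [nth]. destruct (fs_spec (fun i => P i (nth 1 a 0)) (nth 0 a 0)) as [H1 [H2 H3]].
      split.
      + apply orz_spec. destruct (Nat.eq_dec (fs (fun i => P i (nth 1 a 0)) (nth 0 a 0)) (nth 0 a 0)).
        * left; apply eqz_spec; auto.
        * right; apply H2. destruct (proj1 (Nat.lt_eq_cases _ _) H1) as [L|L]; [exact L|contradiction].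
      + intros y Hy E. cbv beta in *. apply (proj1 (orz_spec _ _)) in E. destruct E as [E|E].
        * apply (proj1 (eqz_spec _ _)) in E. lia.
        * apply (H3 y Hy E). }
  apply (rep_comp3 cond); [apply rep_cond| |rp|rp].
  apply (rep_comp2 ltz); [apply rep_ltz|exact HF|rp].
Qed.

Definition ball (P : nat -> nat -> nat) (n x : nat) := notz (bex (fun i y => notz (P i y)) n x).

Lemma ball_spec P n x : ball P n x = 0 <-> forall i, i < n -> P i x = 0.
Proof.
  unfold ball. rewrite notz_spec. split.
  - intros H i Hi. destruct (P i x) eqn:E; auto. exfalso. apply H.
    apply bex_spec. exists i. split; auto. apply notz_spec. congruence.
  - intros H E. apply (proj1 (bex_spec _ _ _)) in E. destruct E as [i [Hi E]]. apply (proj1 (notz_spec _)) in E.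
    apply E, H, Hi.
Qed.

Lemma rep_ball P : rep2 P -> rep2 (ball P).
Proof.
  intros HP. unfold rep2, ball. apply (rep_comp1 notz); [apply rep_notz|].
  apply rep_bex. unfold rep2. apply (rep_comp1 notz); [apply rep_notz|exact HP].
Qed.

Lemma ldecf_eq f z : z <= f -> ldecf f z = ldec z.
Proof. intros H. apply lcode_inj. rewrite lcode_ldec. apply lcode_ldecf; auto. Qed.

Lemma ldec_S w : ldec (S w) = p1 w :: ldec (p2 w).
Proof.
  unfold ldec at 1. simpl. f_equal. apply ldecf_eq. apply p2_le.
Qed.

Lemma ldec_0 : ldec 0 = nil.
Proof. reflexivity. Qed.

Lemma ldec_lt z : forall x, In x (ldec z) -> x < z.
Proof.
  induction z as [z IH] using (well_founded_induction lt_wf).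
  destruct z as [|w]; [simpl; tauto|]. rewrite ldec_S. intros x [<-|H].
  - pose proof (p1_le w). lia.
  - pose proof (p2_le w). apply IH in H; lia.
Qed.

Lemma div6_lt n : 0 < n -> n / 6 < n.
Proof. intros. apply Nat.div_lt; lia. Qed.

Lemma dec_step : forall f,
  (forall n, n < f -> dec f n = dec (S f) n) /\
  (forall m, m < f -> dec_list f m = dec_list (S f) m).
Proof.
  induction f as [|f [IH1 IH2]]; [split; intros; lia|]. split.
  - intros n Hn. cbn [dec dec_list].
    destruct (n mod 6) as [|[|[|[|[|k]]]]] eqn:E; try reflexivity.
    + assert (0 < n) by (destruct n; [discriminate|lia]).
      pose proof (div6_lt n H). pose proof (p1_le (n/6)). pose proof (p2_le (n/6)).
      unfold p1, p2 in *. rewrite IH1, IH2 by lia. reflexivity.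
    + assert (0 < n) by (destruct n; [discriminate|lia]).
      pose proof (div6_lt n H). pose proof (p1_le (n/6)). pose proof (p2_le (n/6)).
      unfold p1, p2 in *. rewrite !IH1 by lia. reflexivity.
    + assert (0 < n) by (destruct n; [discriminate|lia]).
      pose proof (div6_lt n H). rewrite IH1 by lia. reflexivity.
  - intros m Hm. cbn [dec dec_list].
    destruct m as [|m']; [reflexivity|].
    pose proof (p1_le m'). pose proof (p2_le m').
    unfold p1, p2 in *. rewrite IH1, IH2 by lia. reflexivity.
Qed.

Lemma dec_stable f n : n < f -> dec f n = decode n.
Proof.
  intros H. unfold decode. induction H; [reflexivity|].
  rewrite <- IHle. symmetry. apply dec_step. lia.
Qed.

Lemma dec_list_stable : forall f m, m < f -> dec_list f m = map decode (ldec m).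
Proof.
  induction f; intros m H; [lia|]. simpl. destruct m as [|m']; [reflexivity|].
  rewrite ldec_S. simpl. pose proof (p1_le m'). pose proof (p2_le m').
  unfold p1, p2 in *. rewrite dec_stable by lia. rewrite IHf by lia. reflexivity.
Qed.

Definition decode_spec (c : nat) : prog :=
  let q := c / 6 in
  match c mod 6 with
  | 0 => Zero
  | 1 => Succ
  | 2 => Proj q
  | 3 => Comp (decode (p1 q)) (map decode (ldec (p2 q)))
  | 4 => Prim (decode (p1 q)) (decode (p2 q))
  | _ => Mu (decode q)
  end.

Lemma decode_eq c : decode c = decode_spec c.
Proof.
  unfold decode at 1. cbn [dec]. unfold decode_spec.
  destruct (c mod 6) as [|[|[|[|[|k]]]]] eqn:E; try reflexivity.
  - assert (0 < c) by (destruct c; [discriminate|lia]).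
    pose proof (div6_lt c H). pose proof (p1_le (c/6)). pose proof (p2_le (c/6)).
    unfold p1, p2 in *. rewrite dec_stable, dec_list_stable by lia. reflexivity.
  - assert (0 < c) by (destruct c; [discriminate|lia]).
    pose proof (div6_lt c H). pose proof (p1_le (c/6)). pose proof (p2_le (c/6)).
    unfold p1, p2 in *. rewrite !dec_stable by lia. reflexivity.
  - assert (0 < c) by (destruct c; [discriminate|lia]).
    pose proof (div6_lt c H). rewrite dec_stable by lia. reflexivity.
Qed.

Fixpoint enc (p : prog) : nat :=
  match p with
  | Zero => 0
  | Succ => 1
  | Proj i => 6 * i + 2
  | Comp f gs => 6 * pair (enc f) (lcode (map enc gs)) + 3
  | Prim f g => 6 * pair (enc f) (enc g) + 4
  | Mu f => 6 * enc f + 5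
  end.

Fixpoint psize (p : prog) : nat :=
  match p with
  | Comp f gs => S (psize f + list_sum (map psize gs))
  | Prim f g => S (psize f + psize g)
  | Mu f => S (psize f)
  | _ => 1
  end.

Lemma mod6 x k : k < 6 -> (6 * x + k) mod 6 = k /\ (6 * x + k) / 6 = x.
Proof.
  intros H. split.
  - rewrite Nat.add_comm, Nat.mul_comm, Nat.Div0.mod_add. apply Nat.mod_small; auto.
  - rewrite Nat.add_comm, Nat.mul_comm, Nat.div_add by lia. rewrite Nat.div_small; auto.
Qed.

Lemma decode_enc : forall p, decode (enc p) = p.
Proof.
  assert (forall n p, psize p <= n -> decode (enc p) = p); [|intros p; apply (H (psize p)); lia].
  induction n; intros p Hs; [destruct p; simpl in Hs; lia|].
  destruct p as [| |i|p l|pf pg|p]; cbn [enc]; rewrite decode_eq; unfold decode_spec.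
  - reflexivity.
  - reflexivity.
  - destruct (mod6 i 2) as [-> ->]; auto.
  - destruct (mod6 (pair (enc p) (lcode (map enc l))) 3) as [-> ->]; auto.
    rewrite p1_pair, p2_pair, ldec_lcode. simpl in Hs. rewrite IHn by lia. f_equal.
    assert (Hl: list_sum (map psize l) <= n) by lia. clear Hs.
    induction l as [|g l IHl]; [reflexivity|]. simpl in *. rewrite IHn by lia.
    rewrite IHl by lia. reflexivity.
  - destruct (mod6 (pair (enc pf) (enc pg)) 4) as [-> ->]; auto.
    rewrite p1_pair, p2_pair. simpl in Hs. rewrite !IHn by lia. reflexivity.
  - destruct (mod6 (enc p) 5) as [-> ->]; auto. simpl in Hs. rewrite IHn by lia. reflexivity.
Qed.

Definition rep4 (f : nat -> nat -> nat -> nat -> nat) :=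
  rep (fun a => f (nth 0 a 0) (nth 1 a 0) (nth 2 a 0) (nth 3 a 0)).
Lemma rep_comp4 f g h k l : rep4 f -> rep g -> rep h -> rep k -> rep l ->
  rep (fun a => f (g a) (h a) (k a) (l a)).
Proof.
  intros Hf Hg Hh Hk Hl. apply (rep_comp _ [g; h; k; l]) in Hf; [|repeat constructor; auto].
  eapply rep_ext; [|exact Hf]. reflexivity.
Qed.

Lemma rep_divc g d : d <> 0 -> rep g -> rep (fun a => g a / d).
Proof. intros Hd Hg. apply (rep_comp1 (fun n => n / d)); auto. apply rep_div; auto. Qed.

Lemma rep_mod6' : rep1 (fun n => n mod 6).
Proof.
  unfold rep1. eapply rep_ext; [intros a; symmetry; apply Nat.Div0.mod_eq|].
  apply (rep_comp2 Nat.sub); [apply rep_sub|apply rep_proj|].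
  apply (rep_comp2 Nat.mul); [apply rep_mul|apply rep_const|].
  apply (rep_comp1 (fun n => n / 6)); [apply rep_div; lia|apply rep_proj].
Qed.

Lemma rep_modc g : rep g -> rep (fun a => g a mod 6).
Proof. intros Hg. apply (rep_comp1 (fun n => n mod 6)); auto. apply rep_mod6'. Qed.

Ltac rp ::= first
  [ apply rep_const
  | apply rep_proj
  | eapply rep_divc; [lia | rp]
  | eapply rep_modc; rp
  | eapply rep_comp4; [solve [eauto with rep] | rp | rp | rp | rp]
  | eapply rep_comp3; [solve [eauto with rep] | rp | rp | rp]
  | eapply rep_comp2; [solve [eauto with rep] | rp | rp]
  | eapply rep_comp1; [solve [eauto with rep] | rp] ].

Definition ec e := p1 e.
Definition eA e := p1 (p2 e).
Definition ev e := p1 (p2 (p2 e)).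
Definition eX e := p2 (p2 (p2 e)).
Definition mk4 a b c d := pair a (pair b (pair c d)).
Definition mk3 a b c := pair a (pair b c).

Lemma ec_mk a b c d : ec (mk4 a b c d) = a. Proof. unfold ec, mk4. now rewrite p1_pair. Qed.
Lemma eA_mk a b c d : eA (mk4 a b c d) = b. Proof. unfold eA, mk4. now rewrite p2_pair, p1_pair. Qed.
Lemma ev_mk a b c d : ev (mk4 a b c d) = c. Proof. unfold ev, mk4. now rewrite !p2_pair, p1_pair. Qed.
Lemma eX_mk a b c d : eX (mk4 a b c d) = d. Proof. unfold eX, mk4. now rewrite !p2_pair. Qed.
Lemma mk3_1 a b c : p1 (mk3 a b c) = a. Proof. unfold mk3. now rewrite p1_pair. Qed.
Lemma mk3_2 a b c : p1 (p2 (mk3 a b c)) = b. Proof. unfold mk3. now rewrite p2_pair, p1_pair. Qed.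
Lemma mk3_3 a b c : p2 (p2 (mk3 a b c)) = c. Proof. unfold mk3. now rewrite !p2_pair. Qed.
Hint Rewrite ec_mk eA_mk ev_mk eX_mk mk3_1 mk3_2 mk3_3 : mk.

Lemma rep_ec : rep1 ec. Proof. unfold rep1, ec. rp. Qed.
Lemma rep_eA : rep1 eA. Proof. unfold rep1, eA. rp. Qed.
Lemma rep_ev : rep1 ev. Proof. unfold rep1, ev. rp. Qed.
Lemma rep_eX : rep1 eX. Proof. unfold rep1, eX. rp. Qed.
Lemma rep_mk4 : rep4 mk4. Proof. unfold rep4, mk4. rp. Qed.
Lemma rep_mk3 : rep3 mk3. Proof. unfold rep3, mk3. rp. Qed.
Lemma rep_mod6 : rep1 (fun n => n mod 6).
Proof.
  unfold rep1. eapply rep_ext; [intros a; symmetry; apply Nat.Div0.mod_eq|].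
  apply (rep_comp2 Nat.sub); [apply rep_sub|rp|].
  apply (rep_comp2 Nat.mul); [apply rep_mul|rp|].
  apply (rep_comp1 (fun n => n / 6)); [apply rep_div; lia|rp].
Qed.
Lemma rep_div6 : rep1 (fun n => n / 6). Proof. apply rep_div; lia. Qed.
#[export] Hint Resolve rep_ec rep_eA rep_ev rep_eX rep_mk4 rep_mk3 rep_mod6 rep_div6 : rep.

Definition inDP j x :=
  andz (eqz (ec (lnth j (ec x))) (eA x))
   (andz (eqz (eA (lnth j (ec x))) (ev x)) (eqz (ev (lnth j (ec x))) (eX x))).
Definition inDz D c A v := bex inDP (len D) (mk4 D c A v).

Lemma rep_inDP : rep2 inDP. Proof. unfold rep2, inDP. rp. Qed.
#[export] Hint Resolve rep_inDP : rep.
Lemma rep_bex_inDP : rep2 (bex inDP). Proof. apply rep_bex, rep_inDP. Qed.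
#[export] Hint Resolve rep_bex_inDP : rep.
Lemma rep_inDz : rep4 inDz. Proof. unfold rep4, inDz. rp. Qed.
#[export] Hint Resolve rep_inDz : rep.

Definition nzP j x :=
  andz (eqz (ec (lnth j (p1 x))) (p1 (p2 x)))
   (andz (eqz (eA (lnth j (p1 x))) (p2 (p2 x))) (notz (ev (lnth j (p1 x))))).
Definition nzDz D c A := bex nzP (len D) (mk3 D c A).
Lemma rep_nzP : rep2 nzP. Proof. unfold rep2, nzP. rp. Qed.
#[export] Hint Resolve rep_nzP : rep.
Lemma rep_bex_nzP : rep2 (bex nzP). Proof. apply rep_bex, rep_nzP. Qed.
#[export] Hint Resolve rep_bex_nzP : rep.
Lemma rep_nzDz : rep3 nzDz. Proof. unfold rep3, nzDz. rp. Qed.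
#[export] Hint Resolve rep_nzDz : rep.

Definition P3 i y := inDz (ec y) (lnth i (eA y)) (ev y) (lnth i (eX y)).
Definition P5 y x := nzDz (p1 x) (p1 (p2 x)) (lcons y (p2 (p2 x))).
Lemma rep_P3 : rep2 P3. Proof. unfold rep2, P3. rp. Qed.
Lemma rep_P5 : rep2 P5. Proof. unfold rep2, P5. rp. Qed.
#[export] Hint Resolve rep_P3 rep_P5 : rep.
Lemma rep_ball_P3 : rep2 (ball P3). Proof. apply rep_ball, rep_P3. Qed.
Lemma rep_ball_P5 : rep2 (ball P5). Proof. apply rep_ball, rep_P5. Qed.
#[export] Hint Resolve rep_ball_P3 rep_ball_P5 : rep.

Definition J0 e := eqz (ev e) 0.
Definition J1 e := eqz (ev e) (S (lhd (eA e))).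
Definition J2 e := eqz (ev e) (lnth (ec e / 6) (eA e)).
Definition J3 D e :=
  andz (eqz (len (eX e)) (len (p2 (ec e / 6))))
   (andz (ball P3 (len (p2 (ec e / 6))) (mk4 D (p2 (ec e / 6)) (eA e) (eX e)))
         (inDz D (p1 (ec e / 6)) (eX e) (ev e))).
Definition J4 D e :=
  cond (lhd (eA e)) (inDz D (p1 (ec e / 6)) (ltl (eA e)) (ev e))
   (andz (inDz D (ec e) (lcons (pred (lhd (eA e))) (ltl (eA e))) (eX e))
         (inDz D (p2 (ec e / 6)) (lcons (pred (lhd (eA e))) (lcons (eX e) (ltl (eA e)))) (ev e))).
Definition J5 D e :=
  andz (inDz D (ec e / 6) (lcons (ev e) (eA e)) 0) (ball P5 (ev e) (mk3 D (ec e / 6) (eA e))).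

Lemma rep_J0 : rep1 J0. Proof. unfold rep1, J0. rp. Qed.
Lemma rep_J1 : rep1 J1. Proof. unfold rep1, J1. rp. Qed.
Lemma rep_J2 : rep1 J2. Proof. unfold rep1, J2. rp. Qed.
Lemma rep_J3 : rep2 J3. Proof. unfold rep2, J3. rp. Qed.
Lemma rep_J4 : rep2 J4. Proof. unfold rep2, J4. rp. Qed.
Lemma rep_J5 : rep2 J5. Proof. unfold rep2, J5. rp. Qed.
#[export] Hint Resolve rep_J0 rep_J1 rep_J2 rep_J3 rep_J4 rep_J5 : rep.

Definition just D e :=
  cond (eqz (ec e mod 6) 0) (J0 e)
  (cond (eqz (ec e mod 6) 1) (J1 e)
  (cond (eqz (ec e mod 6) 2) (J2 e)
  (cond (eqz (ec e mod 6) 3) (J3 D e)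
  (cond (eqz (ec e mod 6) 4) (J4 D e) (J5 D e))))).
Lemma rep_just : rep2 just. Proof. unfold rep2, just. rp. Qed.
#[export] Hint Resolve rep_just : rep.

Definition VP i D := just D (lnth i D).
Lemma rep_VP : rep2 VP. Proof. unfold rep2, VP. rp. Qed.
#[export] Hint Resolve rep_VP : rep.
Definition valid D := ball VP (len D) D.
Lemma rep_ball_VP : rep2 (ball VP). Proof. apply rep_ball, rep_VP. Qed.
#[export] Hint Resolve rep_ball_VP : rep.
Lemma rep_valid : rep1 valid. Proof. unfold rep1, valid. rp. Qed.
#[export] Hint Resolve rep_valid : rep.

Definition TP j x :=
  andz (eqz (ec (lnth j (p1 x))) (p1 (p2 x))) (eqz (eA (lnth j (p1 x))) (lcons (p2 (p2 x)) 0)).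
Lemma rep_TP : rep2 TP. Proof. unfold rep2, TP. rp. Qed.
Lemma rep_bex_TP : rep2 (bex TP). Proof. apply rep_bex, rep_TP. Qed.
#[export] Hint Resolve rep_TP rep_bex_TP : rep.
Definition Tz m z D := andz (valid D) (bex TP (len D) (mk3 D m z)).
Lemma rep_Tz : rep3 Tz. Proof. unfold rep3, Tz. rp. Qed.
#[export] Hint Resolve rep_Tz : rep.

Definition inDL (Dl : list nat) c A v := exists e, In e Dl /\ ec e = c /\ eA e = A /\ ev e = v.
Definition nzL (Dl : list nat) c A := exists e, In e Dl /\ ec e = c /\ eA e = A /\ ev e <> 0.

Lemma in_nth_ex (Dl : list nat) (P : nat -> Prop) :
  (exists j, j < length Dl /\ P (nth j Dl 0)) <-> (exists e, In e Dl /\ P e).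
Proof.
  split.
  - intros [j [Hj H]]. exists (nth j Dl 0). split; auto. apply nth_In; auto.
  - intros [e [He H]]. apply In_nth with (d := 0) in He. destruct He as [j [Hj E]].
    exists j. rewrite E. auto.
Qed.

Lemma inDz_spec Dl c A v : inDz (lcode Dl) c A v = 0 <-> inDL Dl c A v.
Proof.
  unfold inDz, inDL. rewrite bex_spec, len_code. rewrite <- in_nth_ex.
  split; intros [j [Hj H]]; exists j; split; auto.
  - unfold inDP in H. autorewrite with mk in H. rewrite lnth_code in H.
    apply (proj1 (andz_spec _ _)) in H. destruct H as [H1 H2].
    apply (proj1 (andz_spec _ _)) in H2. destruct H2 as [H2 H3].
    apply (proj1 (eqz_spec _ _)) in H1. apply (proj1 (eqz_spec _ _)) in H2.
    apply (proj1 (eqz_spec _ _)) in H3. auto.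
  - unfold inDP. autorewrite with mk. rewrite lnth_code. destruct H as [H1 [H2 H3]].
    apply andz_spec; split; [apply eqz_spec; auto|].
    apply andz_spec; split; apply eqz_spec; auto.
Qed.

Lemma nzDz_spec Dl c A : nzDz (lcode Dl) c A = 0 <-> nzL Dl c A.
Proof.
  unfold nzDz, nzL. rewrite bex_spec, len_code. rewrite <- in_nth_ex.
  split; intros [j [Hj H]]; exists j; split; auto.
  - unfold nzP in H. autorewrite with mk in H. rewrite lnth_code in H.
    apply (proj1 (andz_spec _ _)) in H. destruct H as [H1 H2].
    apply (proj1 (andz_spec _ _)) in H2. destruct H2 as [H2 H3].
    apply (proj1 (eqz_spec _ _)) in H1. apply (proj1 (eqz_spec _ _)) in H2.
    apply (proj1 (notz_spec _)) in H3. auto.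
  - unfold nzP. autorewrite with mk. rewrite lnth_code. destruct H as [H1 [H2 H3]].
    apply andz_spec; split; [apply eqz_spec; auto|].
    apply andz_spec; split; [apply eqz_spec; auto|apply notz_spec; auto].
Qed.

Definition justL (Dl : list nat) (e : nat) : Prop :=
  match ec e mod 6 with
  | 0 => ev e = 0
  | 1 => ev e = S (lhd (eA e))
  | 2 => ev e = lnth (ec e / 6) (eA e)
  | 3 => len (eX e) = len (p2 (ec e / 6)) /\
         (forall i, i < len (p2 (ec e / 6)) ->
            inDL Dl (lnth i (p2 (ec e / 6))) (eA e) (lnth i (eX e))) /\
         inDL Dl (p1 (ec e / 6)) (eX e) (ev e)
  | 4 => (lhd (eA e) = 0 /\ inDL Dl (p1 (ec e / 6)) (ltl (eA e)) (ev e)) \/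
         (lhd (eA e) <> 0 /\
          inDL Dl (ec e) (lcons (pred (lhd (eA e))) (ltl (eA e))) (eX e) /\
          inDL Dl (p2 (ec e / 6)) (lcons (pred (lhd (eA e))) (lcons (eX e) (ltl (eA e)))) (ev e))
  | _ => inDL Dl (ec e / 6) (lcons (ev e) (eA e)) 0 /\
         forall y, y < ev e -> nzL Dl (ec e / 6) (lcons y (eA e))
  end.

Lemma ball_P3_spec n D G A X : ball P3 n (mk4 D G A X) = 0 <->
  forall i, i < n -> inDz D (lnth i G) A (lnth i X) = 0.
Proof.
  rewrite ball_spec. unfold P3. split; intros H i Hi; specialize (H i Hi);
  autorewrite with mk in *; auto.
Qed.

Lemma ball_P5_spec n D q A : ball P5 n (mk3 D q A) = 0 <->
  forall y, y < n -> nzDz D q (lcons y A) = 0.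
Proof.
  rewrite ball_spec. unfold P5. split; intros H i Hi; specialize (H i Hi);
  autorewrite with mk in *; auto.
Qed.

Lemma just_spec Dl e : just (lcode Dl) e = 0 <-> justL Dl e.
Proof.
  unfold just, justL. assert (Hk: ec e mod 6 < 6) by (apply Nat.mod_upper_bound; lia).
  destruct (ec e mod 6) as [|[|[|[|[|[|k]]]]]]; cbn [cond eqz Nat.sub Nat.add]; try lia.
  - unfold J0. apply eqz_spec.
  - unfold J1. apply eqz_spec.
  - unfold J2. apply eqz_spec.
  - unfold J3. rewrite andz_spec, eqz_spec, andz_spec, ball_P3_spec, inDz_spec.
    split; intros [H1 [H2 H3]]; repeat split; auto; intros i Hi; apply inDz_spec; auto.
  - unfold J4. destruct (lhd (eA e)) eqn:E; cbn [cond].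
    + rewrite inDz_spec. split; [intros H; left; auto|]. intros [[_ H]|[H _]]; [auto|congruence].
    + rewrite andz_spec, !inDz_spec. split; [intros H; right; split; [lia|auto]|].
      intros [[H _]|[_ H]]; [congruence|auto].
  - unfold J5. rewrite andz_spec, inDz_spec, ball_P5_spec.
    split; intros [H1 H2]; split; auto; intros y Hy; apply nzDz_spec; auto.
Qed.

Definition validL Dl := forall e, In e Dl -> justL Dl e.

Lemma valid_spec Dl : valid (lcode Dl) = 0 <-> validL Dl.
Proof.
  unfold valid, validL. rewrite ball_spec, len_code. unfold VP. split.
  - intros H e He. apply In_nth with (d := 0) in He. destruct He as [j [Hj <-]].
    specialize (H j Hj). rewrite lnth_code in H. apply just_spec; auto.
  - intros H j Hj. rewrite lnth_code. apply just_spec. apply H. apply nth_In; auto.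
Qed.

Lemma Tz_spec m z Dl : Tz m z (lcode Dl) = 0 <->
  validL Dl /\ exists e, In e Dl /\ ec e = m /\ eA e = lcode [z].
Proof.
  unfold Tz. rewrite andz_spec, valid_spec, bex_spec, len_code, <- in_nth_ex.
  split; intros [HV [j [Hj H]]]; split; auto; exists j; split; auto.
  - unfold TP in H. autorewrite with mk in H. rewrite lnth_code in H.
    apply (proj1 (andz_spec _ _)) in H. destruct H as [H1 H2].
    apply (proj1 (eqz_spec _ _)) in H1. apply (proj1 (eqz_spec _ _)) in H2. auto.
  - unfold TP. autorewrite with mk. rewrite lnth_code. destruct H as [H1 H2].
    apply andz_spec; split; apply eqz_spec; auto.
Qed.

Lemma inDL_mono Dl Dl' c A v : incl Dl Dl' -> inDL Dl c A v -> inDL Dl' c A v.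
Proof. intros I [e [He H]]. exists e. auto. Qed.
Lemma nzL_mono Dl Dl' c A : incl Dl Dl' -> nzL Dl c A -> nzL Dl' c A.
Proof. intros I [e [He H]]. exists e. auto. Qed.

Lemma justL_mono Dl Dl' e : incl Dl Dl' -> justL Dl e -> justL Dl' e.
Proof.
  intros I. unfold justL. destruct (ec e mod 6) as [|[|[|[|[|k]]]]]; auto.
  - intros [H1 [H2 H3]]. split; auto. split; [|eapply inDL_mono; eauto].
    intros i Hi; eapply inDL_mono; eauto.
  - intros [[H1 H2]|[H1 [H2 H3]]]; [left|right]; repeat split; auto; eapply inDL_mono; eauto.
  - intros [H1 H2]. split; [eapply inDL_mono; eauto|]. intros y Hy; eapply nzL_mono; eauto.
Qed.

Lemma validL_app l1 l2 : validL l1 -> validL l2 -> validL (l1 ++ l2).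
Proof.
  intros H1 H2 e He. apply in_app_or in He. destruct He as [He|He].
  - eapply justL_mono; [|apply H1; auto]. intros x Hx; apply in_or_app; auto.
  - eapply justL_mono; [|apply H2; auto]. intros x Hx; apply in_or_app; auto.
Qed.

Lemma validL_cons e l : validL l -> justL (e :: l) e -> validL (e :: l).
Proof.
  intros H1 H2 x [<-|Hx]; auto. eapply justL_mono; [|apply H1; auto]. intros y; simpl; auto.
Qed.

Lemma lhd_ldec A : lhd A = hd 0 (ldec A).
Proof. rewrite <- (lcode_ldec A) at 1. apply lhd_code. Qed.
Lemma lnth_ldec i A : lnth i A = nth i (ldec A) 0.
Proof. rewrite <- (lcode_ldec A) at 1. apply lnth_code. Qed.
Lemma ltl_ldec A : ldec (ltl A) = tl (ldec A).
Proof. rewrite <- (lcode_ldec A) at 1. rewrite ltl_code. apply ldec_lcode. Qed.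
Lemma lcons_ldec x A : ldec (lcons x A) = x :: ldec A.
Proof. rewrite <- (lcode_ldec A) at 1. rewrite lcons_code. apply ldec_lcode. Qed.

Lemma BSL_of a : forall cs vs, length cs = length vs ->
  (forall i, i < length cs -> BS (decode (nth i cs 0)) a (nth i vs 0)) ->
  BSL (map decode cs) a vs.
Proof.
  induction cs as [|c cs IH]; intros [|v vs] E H; simpl in *; try discriminate.
  - constructor.
  - constructor.
    + apply (H 0); lia.
    + apply IH; [lia|]. intros i Hi. apply (H (S i)); lia.
Qed.

Lemma BSM_of f a v : BS f (v :: a) 0 -> (forall y, y < v -> exists w, BS f (y :: a) (S w)) ->
  BSM f a 0 v.
Proof.
  intros H0 H1. assert (forall d y, y + d = v -> BSM f a y v); [|apply (H (v) 0); lia].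
  induction d; intros y E.
  - replace y with v by lia. constructor; auto.
  - destruct (H1 y) as [w Hw]; [lia|]. eapply BMnext; eauto. apply IHd; lia.
Qed.

Lemma c_pos c : c mod 6 <> 0 -> 0 < c.
Proof. intros H. destruct c; [simpl in H; congruence|lia]. Qed.

Lemma sound Dl : validL Dl -> forall e, In e Dl -> BS (decode (ec e)) (ldec (eA e)) (ev e).
Proof.
  intros HV.
  assert (forall c h e, In e Dl -> ec e = c -> lhd (eA e) = h ->
            BS (decode (ec e)) (ldec (eA e)) (ev e)).
  2:{ intros e He. eapply H; eauto. }
  induction c as [c IHc] using (well_founded_induction lt_wf).
  induction h as [h IHh] using (well_founded_induction lt_wf).
  intros e He Ec Eh.
  assert (IN: forall c' A' v', c' < c -> inDL Dl c' A' v' -> BS (decode c') (ldec A') v').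
  { intros c' A' v' Hlt [e' [He' [E1 [E2 E3]]]]. subst. eapply IHc; eauto. }
  pose proof (HV e He) as J. unfold justL in J. pose proof (decode_eq (ec e)) as HD.
  unfold decode_spec in HD.
  destruct (ec e mod 6) as [|[|[|[|[|k]]]]] eqn:Em; rewrite HD.
  - rewrite J. constructor.
  - rewrite J, lhd_ldec. constructor.
  - rewrite J, lnth_ldec. constructor.
  - destruct J as [H1 [H2 H3]].
    assert (Hc: 0 < ec e) by (apply c_pos; congruence).
    pose proof (div6_lt _ Hc) as Q1. pose proof (p1_le (ec e / 6)) as Q2.
    pose proof (p2_le (ec e / 6)) as Q3.
    apply BComp with (vs := ldec (eX e)).
    + apply BSL_of; [unfold len in H1; lia|]. intros i Hi.
      specialize (H2 i Hi). rewrite !lnth_ldec in H2. apply IN; [|exact H2].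
      assert (HI: In (nth i (ldec (p2 (ec e / 6))) 0) (ldec (p2 (ec e / 6))))
        by (apply nth_In; exact Hi).
      apply ldec_lt in HI. lia.
    + apply IN; auto. lia.
  - assert (Hc: 0 < ec e) by (apply c_pos; congruence).
    pose proof (div6_lt _ Hc) as Q1. pose proof (p1_le (ec e / 6)) as Q2.
    pose proof (p2_le (ec e / 6)) as Q3.
    destruct J as [[H1 H2]|[H1 [H2 H3]]].
    + apply BPrim0; [rewrite <- lhd_ldec; auto|]. rewrite <- ltl_ldec. apply IN; auto. lia.
    + destruct (lhd (eA e)) as [|m] eqn:El; [congruence|]. cbn [pred] in H2, H3.
      eapply BPrimS with (r := eX e) (m := m); [rewrite <- lhd_ldec; auto| |].
      * destruct H2 as [e' [He' [E1 [E2 E3]]]].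
        assert (BS (decode (ec e')) (ldec (eA e')) (ev e')) as B.
        { apply (IHh m); [lia|exact He'|congruence|]. rewrite E2. unfold lhd, lcons. simpl.
          apply p1_pair. }
        rewrite E1, E2, E3, lcons_ldec, ltl_ldec, HD in B. exact B.
      * apply IN in H3; [|lia]. rewrite lcons_ldec, lcons_ldec, ltl_ldec in H3. exact H3.
  - assert (Hc: 0 < ec e) by (apply c_pos; congruence).
    pose proof (div6_lt _ Hc) as Q1.
    destruct J as [H1 H2]. constructor. apply BSM_of.
    + apply IN in H1; [|lia]. rewrite lcons_ldec in H1. exact H1.
    + intros y Hy. destruct (H2 y Hy) as [e' [He' [E1 [E2 E3]]]].
      destruct (ev e') as [|w] eqn:Ew; [congruence|]. exists w.
      assert (B: BS (decode (ec e')) (ldec (eA e')) (ev e')) by (eapply IHc; eauto; lia).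
      rewrite E1, E2, Ew, lcons_ldec in B. exact B.
Qed.

Lemma decode_inv c p : decode c = p ->
  match p with
  | Zero => c mod 6 = 0
  | Succ => c mod 6 = 1
  | Proj i => c mod 6 = 2 /\ c / 6 = i
  | Comp f gs => c mod 6 = 3 /\ decode (p1 (c / 6)) = f /\ map decode (ldec (p2 (c / 6))) = gs
  | Prim f g => c mod 6 = 4 /\ decode (p1 (c / 6)) = f /\ decode (p2 (c / 6)) = g
  | Mu f => c mod 6 = 5 /\ decode (c / 6) = f
  end.
Proof.
  intros E. rewrite decode_eq in E. unfold decode_spec in E.
  assert (Hk: c mod 6 < 6) by (apply Nat.mod_upper_bound; lia).
  destruct (c mod 6) as [|[|[|[|[|[|k]]]]]] eqn:Em; subst p; auto; lia.
Qed.

Lemma add_entry Dl c A v X : validL Dl -> justL (mk4 c A v X :: Dl) (mk4 c A v X) ->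
  exists Dl', validL Dl' /\ inDL Dl' c A v.
Proof.
  intros H1 H2. exists (mk4 c A v X :: Dl). split; [apply validL_cons; auto|].
  exists (mk4 c A v X). autorewrite with mk. simpl; auto.
Qed.

Lemma incl_cons_r (e : nat) l : incl l (e :: l).
Proof. intros x Hx; simpl; auto. Qed.

Lemma complete :
  (forall p a v, BS p a v -> forall c, decode c = p ->
     exists Dl, validL Dl /\ inDL Dl c (lcode a) v) /\
  (forall gs a vs, BSL gs a vs -> forall G, map decode (ldec G) = gs ->
     exists Dl, validL Dl /\ length vs = length gs /\
       forall i, i < length gs -> inDL Dl (nth i (ldec G) 0) (lcode a) (nth i vs 0)) /\
  (forall f a y v, BSM f a y v -> forall q, decode q = f ->
     exists Dl, validL Dl /\ inDL Dl q (lcode (v :: a)) 0 /\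
       forall y', y <= y' -> y' < v -> nzL Dl q (lcode (y' :: a))).
Proof.
  apply BS_mut.
  - intros a c E. apply decode_inv in E.
    apply (add_entry [] c (lcode a) 0 0); [intros x []|].
    unfold justL. autorewrite with mk. rewrite E. reflexivity.
  - intros a c E. apply decode_inv in E.
    apply (add_entry [] c (lcode a) _ 0); [intros x []|].
    unfold justL. autorewrite with mk. rewrite E, lhd_code. reflexivity.
  - intros i a c E. apply decode_inv in E. destruct E as [E1 E2].
    apply (add_entry [] c (lcode a) _ 0); [intros x []|].
    unfold justL. autorewrite with mk. rewrite E1, E2, lnth_code. reflexivity.
  - intros f gs a vs v _ IHL _ IHf c E. apply decode_inv in E. destruct E as [E1 [E2 E3]].
    destruct (IHL _ E3) as [Dl1 [V1 [L1 H1]]]. destruct (IHf _ E2) as [Dl2 [V2 H2]].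
    apply (add_entry (Dl1 ++ Dl2) c (lcode a) v (lcode vs)); [apply validL_app; auto|].
    assert (I1: incl Dl1 (mk4 c (lcode a) v (lcode vs) :: Dl1 ++ Dl2))
      by (intros x Hx; right; apply in_or_app; auto).
    assert (I2: incl Dl2 (mk4 c (lcode a) v (lcode vs) :: Dl1 ++ Dl2))
      by (intros x Hx; right; apply in_or_app; auto).
    unfold justL. autorewrite with mk. rewrite E1.
    assert (LG: len (p2 (c / 6)) = length gs) by (unfold len; rewrite <- E3, length_map; auto).
    split; [rewrite len_code, LG; auto|]. split.
    + intros i Hi. rewrite LG in Hi. rewrite lnth_ldec, lnth_code.
      eapply inDL_mono; [exact I1|]. apply H1; auto.
    + eapply inDL_mono; [exact I2|]. exact H2.
  - intros f g a v Eh _ IHf c E. apply decode_inv in E. destruct E as [E1 [E2 E3]].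
    destruct (IHf _ E2) as [Dl1 [V1 H1]].
    apply (add_entry Dl1 c (lcode a) v 0); [auto|].
    unfold justL. autorewrite with mk. rewrite E1. left. rewrite lhd_code, Eh. split; auto.
    rewrite ltl_code. eapply inDL_mono; [apply incl_cons_r|]. exact H1.
  - intros f g a m r v Eh _ IH1 _ IH2 c E. pose proof (IH1 c E) as [Dl1 [V1 H1]].
    apply decode_inv in E. destruct E as [E1 [E2 E3]].
    destruct (IH2 _ E3) as [Dl2 [V2 H2]].
    apply (add_entry (Dl1 ++ Dl2) c (lcode a) v r); [apply validL_app; auto|].
    assert (I1: incl Dl1 (mk4 c (lcode a) v r :: Dl1 ++ Dl2))
      by (intros x Hx; right; apply in_or_app; auto).
    assert (I2: incl Dl2 (mk4 c (lcode a) v r :: Dl1 ++ Dl2))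
      by (intros x Hx; right; apply in_or_app; auto).
    unfold justL. autorewrite with mk. rewrite E1. right. rewrite lhd_code, Eh, ltl_code.
    split; [lia|]. cbn [pred]. rewrite !lcons_code. split.
    + eapply inDL_mono; [exact I1|]. exact H1.
    + eapply inDL_mono; [exact I2|]. exact H2.
  - intros f a v _ IHM c E. apply decode_inv in E. destruct E as [E1 E2].
    destruct (IHM _ E2) as [Dl1 [V1 [H1 H2]]].
    apply (add_entry Dl1 c (lcode a) v 0); [auto|].
    unfold justL. autorewrite with mk. rewrite E1. rewrite lcons_code. split.
    + eapply inDL_mono; [apply incl_cons_r|]. exact H1.
    + intros y Hy. rewrite lcons_code. eapply nzL_mono; [apply incl_cons_r|]. apply H2; lia.
  - intros a G E. exists []. split; [intros x []|]. simpl. split; auto. intros; lia.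
  - intros g gs a v vs _ IHg _ IHgs G E.
    destruct G as [|w]; [rewrite ldec_0 in E; discriminate|]. rewrite ldec_S in E.
    simpl in E. injection E as E1 E2.
    destruct (IHg _ E1) as [Dl1 [V1 H1]]. destruct (IHgs _ E2) as [Dl2 [V2 [L2 H2]]].
    exists (Dl1 ++ Dl2). split; [apply validL_app; auto|]. split; [simpl; auto|].
    intros [|i] Hi; rewrite ldec_S; simpl.
    + eapply inDL_mono; [|exact H1]. intros x Hx; apply in_or_app; auto.
    + eapply inDL_mono; [|apply H2; simpl in Hi; lia]. intros x Hx; apply in_or_app; auto.
  - intros f a y _ IH q E. destruct (IH _ E) as [Dl [V H]]. exists Dl. split; auto.
    split; auto. intros; lia.
  - intros f a y w v _ IH _ IHM q E. destruct (IH _ E) as [Dl1 [V1 H1]].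
    destruct (IHM _ E) as [Dl2 [V2 [H2 H3]]].
    exists (Dl1 ++ Dl2). split; [apply validL_app; auto|]. split.
    + eapply inDL_mono; [|exact H2]. intros x Hx; apply in_or_app; auto.
    + intros y' Hy1 Hy2. destruct (Nat.eq_dec y y') as [<-|Hne].
      * destruct H1 as [e [He [Q1 [Q2 Q3]]]]. exists e. split; [apply in_or_app; auto|].
        rewrite Q3. auto.
      * eapply nzL_mono; [|apply H3; lia]. intros x Hx; apply in_or_app; auto.
Qed.

Theorem W_T m z : W m z <-> exists D, Tz m z D = 0.
Proof.
  split.
  - intros [v Hv]. apply BS_conv in Hv.
    destruct (proj1 complete _ _ _ Hv m eq_refl) as [Dl [V [e [He [E1 [E2 E3]]]]]].
    exists (lcode Dl). apply Tz_spec. split; auto. exists e. auto.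
  - intros [D HD]. rewrite <- (lcode_ldec D) in HD. apply Tz_spec in HD.
    destruct HD as [V [e [He [E1 E2]]]]. exists (ev e). apply BS_conv.
    pose proof (sound _ V e He) as B. rewrite E1, E2, ldec_lcode in B. exact B.
Qed.

Lemma cond01 c : (forall x y, cond c x y = 0 \/ cond c x y = 1) -> True.
Proof. auto. Qed.

Lemma andz01 x y : andz x y = 0 \/ andz x y = 1.
Proof. unfold andz, cond. destruct x, y; auto. Qed.

Lemma par i : i = S (2*(i/2)) \/ i = 2 * (i/2).
Proof. pose proof (Nat.div_mod_eq i 2). pose proof (Nat.mod_upper_bound i 2). lia. Qed.
Lemma div2_odd k : (2*k+1)/2 = k. Proof. symmetry. apply (Nat.div_unique _ _ _ 1); lia. Qed.
Lemma div2_even k : (2*k)/2 = k. Proof. symmetry. apply (Nat.div_unique _ _ _ 0); lia. Qed.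

Lemma rep_of_prog (f : nat -> nat) p : (forall x, converges p [x] (f x)) -> rep1 f.
Proof.
  intros H. exists (Comp p [Proj 0]). intros a. econstructor.
  - constructor; [constructor|constructor].
  - apply BS_conv. apply H.
Qed.

Lemma rep_computable (f : nat -> nat) : rep1 f -> computable_fun f.
Proof.
  intros [p H]. exists p. intros x. apply BS_conv. apply (H [x]).
Qed.

Definition s0 X := p1 X.
Definition s1 X := p1 (p2 X).
Definition s2 X := p1 (p2 (p2 X)).
Definition s3 X := p1 (p2 (p2 (p2 X))).
Definition s4 X := p2 (p2 (p2 (p2 X))).
Definition tup5 a b c d e := pair a (pair b (pair c (pair d e))).
Lemma s0_t a b c d e : s0 (tup5 a b c d e) = a. Proof. unfold s0, tup5. now rewrite p1_pair. Qed.
Lemma s1_t a b c d e : s1 (tup5 a b c d e) = b. Proof. unfold s1, tup5. now rewrite p2_pair, p1_pair. Qed.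
Lemma s2_t a b c d e : s2 (tup5 a b c d e) = c. Proof. unfold s2, tup5. now rewrite !p2_pair, p1_pair. Qed.
Lemma s3_t a b c d e : s3 (tup5 a b c d e) = d. Proof. unfold s3, tup5. now rewrite !p2_pair, p1_pair. Qed.
Lemma s4_t a b c d e : s4 (tup5 a b c d e) = e. Proof. unfold s4, tup5. now rewrite !p2_pair. Qed.
Hint Rewrite s0_t s1_t s2_t s3_t s4_t p1_pair p2_pair : tup.
Lemma rep_s0 : rep1 s0. Proof. unfold rep1, s0. rp. Qed.
Lemma rep_s1 : rep1 s1. Proof. unfold rep1, s1. rp. Qed.
Lemma rep_s2 : rep1 s2. Proof. unfold rep1, s2. rp. Qed.
Lemma rep_s3 : rep1 s3. Proof. unfold rep1, s3. rp. Qed.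
Lemma rep_s4 : rep1 s4. Proof. unfold rep1, s4. rp. Qed.
#[export] Hint Resolve rep_s0 rep_s1 rep_s2 rep_s3 rep_s4 : rep.

Section Part1.
Variable t : nat -> nat.
Hypothesis Ht : rep1 t.
Hint Resolve Ht : rep.

(* X = (y, a, b, u1, u2);  Y = (x, (u, c, u3, u4, u5)) *)
Definition chi n X Y :=
  andz (Tz (t n) (pair (p1 Y) (s0 X)) (s0 (p2 Y)))
   (orz (notz (Tz (t n) (pair (s1 X) (s0 X)) (s3 X)))
    (orz (notz (Tz (t n) (pair (s2 X) (s0 X)) (s4 X)))
     (andz (Tz (t n) (pair (s1 (p2 Y)) (s0 X)) (s2 (p2 Y)))
      (andz (Tz (t n) (pair (s1 X) (s1 (p2 Y))) (s3 (p2 Y)))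
            (Tz (t n) (pair (s2 X) (s1 (p2 Y))) (s4 (p2 Y))))))).

Lemma rep_chi : rep3 chi.
Proof. unfold rep3, chi. rp. Qed.

Lemma Vt_T n i j : V (t n) i j <-> exists D, Tz (t n) (pair i j) D = 0.
Proof. unfold V. apply W_T. Qed.

Lemma part1 :
  (forall n i j, V (t n) i j <-> clos_trans nat (V n) i j) ->
  Pi02 (fun n => interpolable (V (t n))).
Proof.
  intros HT. exists (fun n x y => chi n x y = 0). split.
  - destruct rep_chi as [p Hp]. exists p. intros n x y. split.
    + intros H. apply BS_conv. rewrite <- H. exact (Hp [n; x; y]).
    + intros H. apply BS_conv. pose proof (Hp [n; x; y]) as B. cbn [nth] in B.
      assert (E: chi n x y = 0 \/ chi n x y = 1) by (unfold chi; apply andz01).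
      destruct E as [E|E]; [contradiction|]. rewrite E in B. exact B.
  - intros n. split.
    + intros [_ HD] X.
      destruct (HD (s0 X)) as [[x Hx] Hdir].
      apply Vt_T in Hx. destruct Hx as [u Hu].
      destruct (Nat.eq_dec (Tz (t n) (pair (s1 X) (s0 X)) (s3 X)) 0) as [E1|E1];
      [destruct (Nat.eq_dec (Tz (t n) (pair (s2 X) (s0 X)) (s4 X)) 0) as [E2|E2]|].
      * assert (Va: V (t n) (s1 X) (s0 X)) by (apply Vt_T; exists (s3 X); exact E1).
        assert (Vb: V (t n) (s2 X) (s0 X)) by (apply Vt_T; exists (s4 X); exact E2).
        destruct (Hdir _ _ Va Vb) as [c [Hc1 [Hc2 Hc3]]].
        apply Vt_T in Hc1, Hc2, Hc3. destruct Hc1 as [u3 H3], Hc2 as [u4 H4], Hc3 as [u5 H5].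
        exists (pair x (tup5 u c u3 u4 u5)). unfold chi. autorewrite with tup.
        apply andz_spec; split; auto. apply orz_spec; right. apply orz_spec; right.
        apply andz_spec; split; auto. apply andz_spec; split; auto.
      * exists (pair x (tup5 u 0 0 0 0)). unfold chi. autorewrite with tup.
        apply andz_spec; split; auto. apply orz_spec; right. apply orz_spec; left.
        apply notz_spec; auto.
      * exists (pair x (tup5 u 0 0 0 0)). unfold chi. autorewrite with tup.
        apply andz_spec; split; auto. apply orz_spec; left. apply notz_spec; auto.
    + intros H. split.
      * intros i j k H1 H2. apply HT. apply HT in H1, H2. eapply t_trans; eauto.
      * intros y. split.
        -- destruct (H (tup5 y 0 0 0 0)) as [Y HY]. unfold chi in HY.
           apply (proj1 (andz_spec _ _)) in HY. destruct HY as [HY _].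
           autorewrite with tup in HY. exists (p1 Y). apply Vt_T. exists (s0 (p2 Y)). exact HY.
        -- intros a b Ha Hb. apply Vt_T in Ha, Hb. destruct Ha as [u1 Ha], Hb as [u2 Hb].
           destruct (H (tup5 y a b u1 u2)) as [Y HY]. unfold chi in HY.
           autorewrite with tup in HY.
           apply (proj1 (andz_spec _ _)) in HY. destruct HY as [_ HY].
           apply (proj1 (orz_spec _ _)) in HY. destruct HY as [HY|HY];
             [apply (proj1 (notz_spec _)) in HY; exfalso; exact (HY Ha)|].
           apply (proj1 (orz_spec _ _)) in HY. destruct HY as [HY|HY];
             [apply (proj1 (notz_spec _)) in HY; exfalso; exact (HY Hb)|].
           apply (proj1 (andz_spec _ _)) in HY. destruct HY as [H3 HY].
           apply (proj1 (andz_spec _ _)) in HY. destruct HY as [H4 H5].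
           exists (s1 (p2 Y)). split; [|split]; apply Vt_T; eexists; [exact H3|exact H4|exact H5].
Qed.
End Part1.

Section Part2.
Variable RB : nat -> nat -> nat -> Prop.
Variable pB : prog.
Hypothesis HpB : forall n x y,
  (RB n x y -> converges pB [n; x; y] 0) /\ (~ RB n x y -> converges pB [n; x; y] 1).

Definition chiB n x y := if excluded_middle_informative (RB n x y) then 0 else 1.

Lemma chiB_spec n x y : chiB n x y = 0 <-> RB n x y.
Proof. unfold chiB. destruct (excluded_middle_informative (RB n x y)); split; auto; congruence. Qed.

Lemma rep_chiB : rep3 chiB.
Proof.
  exists (Comp pB [Proj 0; Proj 1; Proj 2]). intros a. econstructor.
  - repeat constructor.
  - apply BS_conv. unfold chiB. destruct (excluded_middle_informative _) as [H|H];
    apply HpB; exact H.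
Qed.
Hint Resolve rep_chiB : rep.

Definition Hf y n z :=
  orz (andz (eqz (p1 z) (p2 z)) (eqz (p1 z) (S (2 * (p1 z / 2)))))
      (andz (eqz (p1 z) 1) (andz (eqz (p2 z) (2 * (p2 z / 2))) (chiB n (p2 z / 2) y))).

Lemma rep_Hf : rep3 Hf.
Proof. unfold rep3, Hf. rp. Qed.

Definition Srel n i j := (i = j /\ exists k, i = 2 * k + 1) \/
                         (i = 1 /\ exists x, j = 2 * x /\ exists y, RB n x y).

Lemma Hf_spec n i j : (exists y, Hf y n (pair i j) = 0) <-> Srel n i j.
Proof.
  unfold Hf, Srel. rewrite p1_pair, p2_pair. split.
  - intros [y H]. apply (proj1 (orz_spec _ _)) in H. destruct H as [H|H].
    + apply (proj1 (andz_spec _ _)) in H. destruct H as [H1 H2].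
      apply (proj1 (eqz_spec _ _)) in H1. apply (proj1 (eqz_spec _ _)) in H2.
      left. split; auto. exists (i / 2). lia.
    + apply (proj1 (andz_spec _ _)) in H. destruct H as [H1 H2].
      apply (proj1 (andz_spec _ _)) in H2. destruct H2 as [H2 H3].
      apply (proj1 (eqz_spec _ _)) in H1. apply (proj1 (eqz_spec _ _)) in H2.
      apply chiB_spec in H3. right. split; auto. exists (j / 2). split; auto. exists y; auto.
  - intros [[<- [k ->]]|[-> [x [-> [y Hy]]]]].
    + exists 0. apply orz_spec. left. apply andz_spec. split; apply eqz_spec; auto.
      rewrite div2_odd. lia.
    + exists y. apply orz_spec. right. apply andz_spec. split; [apply eqz_spec; auto|].
      rewrite div2_even. apply andz_spec. split; [apply eqz_spec; auto|]. apply chiB_spec; auto.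
Qed.

Fixpoint cprog (n : nat) : prog :=
  match n with 0 => Zero | S m => Comp Succ [cprog m] end.

Lemma cprog_BS n a : BS (cprog n) a n.
Proof.
  induction n; simpl; [constructor|]. econstructor; [constructor; [exact IHn|constructor]|].
  apply (BSucc [n]).
Qed.

Definition cc n := enc (cprog n).

Lemma cc_S n : cc (S n) = 6 * pair 1 (S (pair (cc n) 0)) + 3.
Proof. reflexivity. Qed.

Lemma rep_cc : rep1 cc.
Proof.
  pose proof (rep_prim (fun xs => 0) (fun a => 6 * pair 1 (S (pair (nth 1 a 0) 0)) + 3)) as H.
  eapply rep_ext; [|apply H; rp].
  assert (E: forall m xs, prf (fun xs => 0) (fun a => 6 * pair 1 (S (pair (nth 1 a 0) 0)) + 3) m xs = cc m).
  { induction m; intros xs; [reflexivity|]. simpl prf. rewrite IHm. cbn [nth]. rewrite cc_S. reflexivity. }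
  intros a. destruct a as [|m xs]; [reflexivity|]. cbn [hd tl nth]. apply E.
Qed.
#[local] Hint Resolve rep_cc : rep.

Lemma Mu_halts f (h : list nat -> nat) a :
  (forall b, BS f b (h b)) -> ((exists v, BS (Mu f) a v) <-> exists y, h (y :: a) = 0).
Proof.
  intros Hh. split.
  - intros [v Hv]. inversion Hv; subst.
    assert (forall y0, BSM f a y0 v -> h (v :: a) = 0).
    { intros y0 HM. induction HM; auto.
      apply (BS_det f (y :: a)); [apply Hh|auto]. }
    eauto.
  - intros [y Hy]. 
    assert (forall d y0, y0 + d = y -> exists v, BSM f a y0 v).
    { induction d; intros y0 E.
      - replace y0 with y by lia. exists y. constructor. rewrite <- Hy. apply Hh.
      - destruct (h (y0 :: a)) eqn:E0.
        + exists y0. constructor. rewrite <- E0. apply Hh.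
        + destruct (IHd (S y0)) as [v Hv]; [lia|]. exists v. eapply BMnext; [|exact Hv].
          rewrite <- E0. apply Hh. }
    destruct (H y 0) as [v Hv]; [lia|]. exists v. constructor; auto.
Qed.


Lemma Srel_trans n : transitive nat (Srel n).
Proof.
  intros i j k H1 H2. unfold Srel in *.
  destruct H1 as [[<- [k1 E1]]|[-> [x [-> Hx]]]]; auto.
  destruct H2 as [[<- [k2 E2]]|[E2 _]]; [right; eauto|lia].
Qed.

Lemma Srel_interp n : interpolable (Srel n) <-> forall x, exists y, RB n x y.
Proof.
  split.
  - intros [_ HD] x. destruct (HD (2 * x)) as [[w Hw] _].
    destruct Hw as [[E [k Ek]]|[_ [x' [E [y Hy]]]]]; [lia|].
    replace x with x' by lia. eauto.
  - intros H. split; [apply Srel_trans|]. intros z.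
    destruct (par z) as [Ez|Ez].
    + split.
      * exists z. left. split; auto. exists (z / 2). lia.
      * intros a b Ha Hb. exists z.
        assert (a = z). { destruct Ha as [[<- _]|[_ [x [E _]]]]; [auto|lia]. }
        assert (b = z). { destruct Hb as [[<- _]|[_ [x [E _]]]]; [auto|lia]. }
        subst. split; [|split]; left; split; auto; exists (z / 2); lia.
    + assert (S1: Srel n 1 z).
      { right. split; auto. exists (z / 2). split; auto. }
      split; [eauto|].
      intros a b Ha Hb.
      assert (a = 1). { destruct Ha as [[<- [k E]]|[-> _]]; [lia|auto]. }
      assert (b = 1). { destruct Hb as [[<- [k E]]|[-> _]]; [lia|auto]. }
      subst. exists 1. split; auto. split; left; split; auto; exists 0; lia.
Qed.

Lemma invComp f gs a v : BS (Comp f gs) a v -> exists vs, BSL gs a vs /\ BS f vs v.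
Proof. intros H. inversion H; subst. eauto. Qed.
Lemma invLcons g gs a vs : BSL (g :: gs) a vs -> exists v vs', vs = v :: vs' /\ BS g a v /\ BSL gs a vs'.
Proof. intros H. inversion H; subst. eauto 6. Qed.
Lemma invLnil a vs : BSL [] a vs -> vs = [].
Proof. intros H. inversion H; auto. Qed.

Section Red.
Variable pH : prog.
Hypothesis HpH : forall b, BS pH b (Hf (nth 0 b 0) (nth 1 b 0) (nth 2 b 0)).

Definition Qn n := Comp (Mu pH) [cprog n; Proj 0].
Definition fn n := 6 * pair (enc (Mu pH)) (S (pair (cc n) (S (pair 2 0)))) + 3.

Lemma fn_enc n : fn n = enc (Qn n).
Proof. reflexivity. Qed.

Lemma V_fn n i j : V (fn n) i j <-> Srel n i j.
Proof.
  unfold V, W. rewrite fn_enc, decode_enc. rewrite <- Hf_spec.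
  assert (E: (exists v, converges (Qn n) [pair i j] v) <-> exists v, BS (Mu pH) [n; pair i j] v).
  { split.
    - intros [v Hv]. apply BS_conv in Hv. exists v.
      apply invComp in Hv. destruct Hv as [vs [HL HM]].
      apply invLcons in HL. destruct HL as [v1 [vs1 [-> [B1 HL]]]].
      apply invLcons in HL. destruct HL as [v2 [vs2 [-> [B2 HL]]]].
      apply invLnil in HL. subst.
      pose proof (BS_det _ _ _ _ B1 (cprog_BS n [pair i j])). subst.
      pose proof (BS_det _ _ _ _ B2 (BProj 0 [pair i j])). subst. exact HM.
    - intros [v Hv]. exists v. apply BS_conv. econstructor; [|exact Hv].
      constructor; [apply cprog_BS|]. constructor; [apply (BProj 0 [pair i j])|constructor]. }
  rewrite E. rewrite (Mu_halts pH (fun b => Hf (nth 0 b 0) (nth 1 b 0) (nth 2 b 0))); [|exact HpH].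
  reflexivity.
Qed.

Lemma rep_fn : rep1 fn.
Proof. unfold rep1, fn. rp. Qed.
End Red.

End Part2.

Lemma clos_trans_iff (R S : nat -> nat -> Prop) : (forall i j, R i j <-> S i j) ->
  forall i j, clos_trans nat R i j -> clos_trans nat S i j.
Proof.
  intros E i j H. induction H; [constructor; apply E; auto|eapply t_trans; eauto].
Qed.

Lemma clos_trans_tr (S : nat -> nat -> Prop) : transitive nat S ->
  forall i j, clos_trans nat S i j -> S i j.
Proof. intros T i j H. induction H; eauto. Qed.

Lemma interp_iff (R S : nat -> nat -> Prop) : (forall i j, R i j <-> S i j) ->
  interpolable R -> interpolable S.
Proof.
  intros E [T D]. split.
  - intros i j k H1 H2. apply E. apply E in H1, H2. eapply T; eauto.
  - intros y. destruct (D y) as [[x Hx] D2]. split; [exists x; apply E; auto|].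
    intros a b Ha Hb. apply E in Ha, Hb. destruct (D2 a b Ha Hb) as [c [H1 [H2 H3]]].
    exists c. repeat split; apply E; auto.
Qed.

Theorem proposition18 :
  forall t : nat -> nat,
    computable_fun t ->
    (forall n i j, V (t n) i j <-> clos_trans nat (V n) i j) ->
    Pi02_complete (fun n => interpolable (V (t n))).
Proof.
  intros t [pt Hpt] HT. split.
  - apply (part1 t); [apply (rep_of_prog t pt Hpt)|exact HT].
  - intros B [RB [[pB HpB] HB]].
    destruct (rep_Hf RB pB HpB) as [pH HpH].
    exists (fn pH). split.
    + apply rep_computable. apply rep_fn.
    + intros n. rewrite HB.
      assert (EQ: forall i j, V (t (fn pH n)) i j <-> Srel RB n i j).
      { intros i j. rewrite HT. split.
        - intros H. apply clos_trans_tr; [apply Srel_trans|].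
          eapply clos_trans_iff; [|exact H]. intros a b. exact (V_fn RB pH HpH n a b).
        - intros H. apply t_step. apply (V_fn RB pH HpH n i j). exact H. }
      rewrite <- Srel_interp. split; apply interp_iff; intros i j; rewrite EQ; tauto.
Qed.
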